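(* Let $p,q$ be consecutive patterns of length 4 satisfying the standing assumptions below, and let $\epsilon\in I_n$ with $T:=\operatorname{Em}(p,\epsilon)$. Consider the following iterative procedure: (a) compute $T=\operatorname{Em}(p,\epsilon)$; (b) change all occurrences of $p$ at positions in $T$ to $q$, and call the resulting sequence $\epsilon'$; (c) let $S=\operatorname{Em}(q,\epsilon')$ and change all occurrences of $q$ at positions in $S\setminus T$ to $p$, calling the result again $\epsilon'$; (d) repeat step (c) until $S\setminus T=\emptyset$, so that $\epsilon'$ has $q$ occurring exactly at the positions in $T$. Then the output $\epsilon'$ of this procedure equals $\phi_{=T}(\epsilon)$, where $\phi_{=T}$ is the recursively defined bijection described below.
   Context: An inversion sequence of length $n$ is an integer sequence $\epsilon_1\cdots\epsilon_n$ with $0\le\epsilon_i<i$; $I_n$ is the set of them. The reduction of an integer word replaces each occurrence of its $k$-th smallest distinct value by $k-1$. A consecutive pattern $p=\underline{p_1p_2p_3p_4}$ occurs in $\epsilon$ at position $i$ if the reduction of $\epsilon_i\cdots\epsilon_{i+3}$ is $p_1p_2p_3p_4$; $\operatorname{Em}(p,\epsilon)$ is the set of such $i$. A pattern is non-overlapping if no two of its occurrences in any sequence overlap in more than one entry. Standing assumptions: $p$ and $q$ are each non-overlapping, agree in their first entries and in their last entries, have the same maximum entry $d$, and each contains every value in $\{0,\dots,d\}$. Change operation: if $p$ occurs at $i$, let $f$ be the order-preserving bijection from $\{0,\dots,d\}$ onto the set of values $\{\epsilon_i,\dots,\epsilon_{i+3}\}$ (so $\epsilon_{i+j-1}=f(p_j)$);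 changing the occurrence to $q$ replaces $\epsilon_{i+j-1}$ by $f(q_j)$, $j=1,\dots,4$ (symmetrically from $q$ to $p$). It is assumed such changes on inversion sequences always yield inversion sequences. Let $I_{n,p}(\supseteq T)=\{\epsilon\in I_n:\operatorname{Em}(p,\epsilon)\supseteq T\}$, $I_{n,p}(=T)=\{\epsilon\in I_n:\operatorname{Em}(p,\epsilon)=T\}$, and similarly for $q$. $\phi_{\ge T}:I_{n,p}(\supseteq T)\to I_{n,q}(\supseteq T)$ changes the occurrences of $p$ at all positions of $T$ to $q$; it is assumed to be a bijection, with inverse $\phi^{-1}_{\ge T}$ changing the occurrences of $q$ at positions of $T$ to $p$. The maps $\phi_{=T}:I_{n,p}(=T)\to I_{n,q}(=T)$ and $\psi_{=T}=\phi_{=T}^{-1}$ are defined by mutual recursion: to compute $\phi_{=T}(\epsilon)$, set $\eta:=\phi_{\ge T}(\epsilon)$; then repeatedly let $S:=\operatorname{Em}(q,\eta)$; if $S=T$ output $\eta$, otherwise (then $S\supsetneq T$) replace $\eta$ by $\phi_{\ge T}(\psi_{=S}(\eta))$ and repeat. To compute $\psi_{=T}(\eta)$, set $\epsilon:=\phi^{-1}_{\ge T}(\eta)$; then repeatedly let $R:=\operatorname{Em}(p,\epsilon)$; if $R=T$ output $\epsilon$, otherwise replace $\epsilon$ by $\phi^{-1}_{\ge T}(\phi_{=R}(\epsilon))$ and repeat. *)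

(* Defs.v *)
From mathcomp Require Import all_boot.
From mathcomp Require Import finmap.

Set Implicit Arguments.
Unset Strict Implicit.
Unset Printing Implicit Defensive.

Local Open Scope fset_scope.

(* Sequences are [seq nat]; entries and positions are 1-indexed as in the
   paper: eps_k is [nth 0 eps k.-1]. *)

Definition invseq (n : nat) (e : seq nat) : bool :=
  (size e == n) && all (fun k => nth 0 e k.-1 < k) (iota 1 n).

Definition vals (w : seq nat) : seq nat := sort leq (undup w).

Definition red (w : seq nat) : seq nat := [seq index x (vals w) | x <- w].

Definition window (e : seq nat) (i : nat) : seq nat := take 4 (drop i.-1 e).

Definition occurs (r e : seq nat) (i : nat) : bool :=
  [&& 1 <= i, i + 3 <= size e & red (window e i) == r].

Definition Em (r e : seq nat) : {fset nat} :=
  [fset i | i in [seq i <- iota 1 (size e) | occurs r e i]].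

Definition non_overlapping (r : seq nat) : Prop :=
  forall (w : seq nat) (i j : nat),
    occurs r w i -> occurs r w j -> i < j -> i + 3 <= j.

(* f(j) for the window at position i: order-preserving bijection from
   {0..d} onto the set of values of the window *)
Definition fwin (e : seq nat) (i j : nat) : nat := nth 0 (vals (window e i)) j.

(* change the occurrences at all positions of T to the pattern r
   (simultaneously): entry k in the window of a position i in T
   (the least such i) becomes f_i(r_(k-i+1)). *)
Definition chg (r : seq nat) (T : {fset nat}) (e : seq nat) : seq nat :=
  mkseq (fun k0 =>
    let k := k0.+1 in
    match [seq i <- sort leq (enum_fset T) | (i <= k) && (k <= i + 3)] with
    | i :: _ => fwin e i (nth 0 r (k - i))
    | [::] => nth 0 e k0
    end) (size e).

Section Maps.
Variables p q : seq nat.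

(* phi_{>=T} e = chg q T e, its inverse is chg p T.  The mutually recursive
   maps phi_{=T}, psi_{=T} (with their inner "repeat" loops), with fuel k:
   [None] means "fuel exhausted". *)
Fixpoint phiEq (k : nat) (T : {fset nat}) (e : seq nat) : option (seq nat) :=
  match k with
  | 0 => None
  | k'.+1 => phiLoop k' T (chg q T e)
  end
with phiLoop (k : nat) (T : {fset nat}) (h : seq nat) : option (seq nat) :=
  match k with
  | 0 => None
  | k'.+1 =>
      let S := Em q h in
      if S == T then Some h
      else match psiEq k' S h with
           | Some x => phiLoop k' T (chg q T x)
           | None => None
           end
  end
with psiEq (k : nat) (T : {fset nat}) (h : seq nat) : option (seq nat) :=
  match k with
  | 0 => None
  | k'.+1 => psiLoop k' T (chg p T h)
  end
with psiLoop (k : nat) (T : {fset nat}) (e : seq nat) : option (seq nat) :=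
  match k with
  | 0 => None
  | k'.+1 =>
      let R := Em p e in
      if R == T then Some e
      else match phiEq k' R e with
           | Some x => psiLoop k' T (chg p T x)
           | None => None
           end
  end.

(* steps (c)-(d) of the iterative procedure, with fuel k *)
Fixpoint procLoop (k : nat) (T : {fset nat}) (e' : seq nat) : option (seq nat) :=
  match k with
  | 0 => None
  | k'.+1 =>
      let D := Em q e' `\` T in
      if D == fset0 then Some e' else procLoop k' T (chg p D e')
  end.

Definition procedure (k : nat) (e : seq nat) : option (seq nat) :=
  let T := Em p e in procLoop k T (chg q T e).

End Maps.

(* Main.v *)
Require Import Defs.
From mathcomp Require Import all_boot.
From mathcomp Require Import finmap.
From mathcomp Require Import zify.
From Stdlib Require Import Lia.
Local Open Scope fset_scope.
Set Implicit Arguments.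
Unset Strict Implicit.
Unset Printing Implicit Defensive.

Lemma EmP r e i : (i \in Em r e) = occurs r e i.
Proof.
rewrite /Em in_fset /= mem_filter mem_iota.
case Ho: (occurs r e i) => //=.
move: Ho => /and3P [H1 H2 _]; apply/andP; split => //.
rewrite add1n ltnS; apply: leq_trans H2; exact: leq_addr.
Qed.

Lemma size_window e i : i + 3 <= size e -> 1 <= i -> size (window e i) = 4.
Proof.
move=> H1 H2; rewrite /window size_take size_drop.
case: i H1 H2 => // i H1 _ /=.
rewrite /minn; case: ltnP => //; lia.
Qed.

Lemma nth_window e i m : m < 4 -> nth 0 (window e i) m = nth 0 e (i.-1 + m).
Proof. by move=> Hm; rewrite /window nth_take // nth_drop. Qed.

Lemma red_nth w m : m < size w -> nth 0 (vals w) (nth 0 (red w) m) = nth 0 w m.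
Proof.
move=> Hm; rewrite /red (nth_map 0) // nth_index //.
by rewrite /vals mem_sort mem_undup mem_nth.
Qed.

Lemma occ_size r e i : occurs r e i -> i + 3 <= size e.
Proof. by case/and3P. Qed.

Lemma occ_pos r e i : occurs r e i -> 1 <= i.
Proof. by case/and3P. Qed.

Lemma occ_fwin s e i m : occurs s e i -> m < 4 ->
  fwin e i (nth 0 s m) = nth 0 e (i.-1 + m).
Proof.
move=> Ho Hm; move: (Ho) => /and3P [H1 H2 /eqP Hr].
rewrite /fwin -Hr red_nth ?nth_window // size_window //.
Qed.

Lemma size_chg r T e : size (chg r T e) = size e.
Proof. by rewrite /chg size_mkseq. Qed.

Lemma window_eq e e' i : size e' = size e ->
  (forall m, m < 4 -> nth 0 e' (i.-1 + m) = nth 0 e (i.-1 + m)) ->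
  window e' i = window e i.
Proof.
move=> Hs Hm; apply: (@eq_from_nth _ 0).
  by rewrite /window !size_take !size_drop Hs.
move=> m; rewrite /window size_take => Hlt.
have Hm4 : m < 4 by move: Hlt; case: (ltnP 4 (size (drop i.-1 e'))); lia.
by rewrite -/(window e' i) -/(window e i) !nth_window // Hm.
Qed.

Section Sites.
Variables (r s : seq nat).
Hypothesis Hno : non_overlapping s.
Hypothesis Hf : nth 0 r 0 = nth 0 s 0.
Hypothesis Hl : nth 0 r 3 = nth 0 s 3.

Lemma far e i j : occurs s e i -> occurs s e j -> i != j -> (i + 3 <= j) || (j + 3 <= i).
Proof.
move=> Hi Hj; case: (ltngtP i j) => // H _.
- by rewrite (Hno Hi Hj H).
- by rewrite (Hno Hj Hi H) orbT.
Qed.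

Lemma chg_nth_in T e i k0 : T `<=` Em s e -> i \in T -> i <= k0 <= i + 1 ->
  nth 0 (chg r T e) k0 = fwin e i (nth 0 r (k0.+1 - i)).
Proof.
move=> /fsubsetP HT Hi /andP [Hk1 Hk2].
have Hoi : occurs s e i by rewrite -EmP; apply: HT.
have Hks : k0 < size e by move: (occ_size Hoi); lia.
rewrite /chg nth_mkseq //=.
set L := [seq _ <- _ | _].
have HiL : i \in L.
  by rewrite mem_filter mem_sort; apply/andP; split => //; apply/andP; split; lia.
have Hge : forall y, y \in L -> i <= y.
  move=> y; rewrite mem_filter mem_sort => /andP [/andP [Hy1 Hy2] HyT].
  have Hoy : occurs s e y by rewrite -EmP; apply: HT.
  case: (ltnP y i) => // Hyi.
  move: (far Hoy Hoi); rewrite (ltn_eqF Hyi) => /(_ isT) /orP [] H; lia.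
have HsL : sorted leq L by apply: (sorted_filter leq_trans); exact: (sort_sorted leq_total).
case HL: L HiL HsL Hge => [|x L'] //.
rewrite in_cons => /orP [/eqP <- //|HiL'] HsL Hge.
have Hxi : x <= i.
  have := order_path_min leq_trans HsL => /allP /(_ i HiL'); done.
have Hix : i <= x by apply: Hge; rewrite mem_head.
by have -> : x = i by apply/eqP; rewrite eqn_leq Hxi Hix.
Qed.

Lemma chg_nth_out T e k0 : T `<=` Em s e ->
  (forall i, i \in T -> ~~ (i <= k0 <= i + 1)) ->
  nth 0 (chg r T e) k0 = nth 0 e k0.
Proof.
move=> /fsubsetP HT Hout.
case: (ltnP k0 (size e)) => Hks; last first.
  by rewrite !nth_default // size_chg.
rewrite /chg nth_mkseq //=.
set L := [seq _ <- _ | _].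
case HL: L => [|x L'] //.
have : x \in L by rewrite HL mem_head.
rewrite mem_filter mem_sort => /andP [/andP [Hx1 Hx2] HxT].
have Hox : occurs s e x by rewrite -EmP; apply: HT.
have Hx0 := occ_pos Hox.
move: (Hout x HxT) => Hn.
have [E|E] : (k0.+1 - x = 0) \/ (k0.+1 - x = 3) by lia.
- by rewrite E Hf occ_fwin //; congr nth; lia.
- by rewrite E Hl occ_fwin //; congr nth; lia.
Qed.


Lemma interior_uniq e i j k0 : occurs s e i -> occurs s e j ->
  i <= k0 <= i + 1 -> j <= k0 <= j + 1 -> i = j.
Proof.
move=> Hi Hj H1 H2; apply/eqP; apply/negPn/negP => Hne.
move: (far Hi Hj Hne) => /orP []; lia.
Qed.

Lemma chg_keep T e i : T `<=` Em s e -> occurs s e i -> i \notin T ->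
  window (chg r T e) i = window e i.
Proof.
move=> HT Hoi HiT.
apply: window_eq; first exact: size_chg.
move=> m Hm; apply: chg_nth_out => // i2 Hi2.
have Ho2 : occurs s e i2 by rewrite -EmP; apply: (fsubsetP HT).
have Hne : i != i2 by apply/negP => /eqP E; rewrite E Hi2 in HiT.
have Hp := occ_pos Hoi.
move: (far Hoi Ho2 Hne) => /orP [] H; apply/negP; lia.
Qed.

Lemma sites_keep T1 T2 e : T1 `<=` Em s e -> T2 `<=` Em s e ->
  (forall x, x \in T1 -> x \notin T2) -> T1 `<=` Em s (chg r T2 e).
Proof.
move=> H1 H2 Hd; apply/fsubsetP => i Hi.
have Hoi : occurs s e i by rewrite -EmP; apply: (fsubsetP H1).
by rewrite EmP /occurs chg_keep // ?size_chg; [exact: Hoi | exact: Hd].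
Qed.

Lemma chgU T1 T2 e : T1 `<=` Em s e -> T2 `<=` Em s e ->
  (forall x, x \in T1 -> x \notin T2) ->
  chg r (T1 `|` T2) e = chg r T1 (chg r T2 e).
Proof.
move=> H1 H2 Hd.
have HU : T1 `|` T2 `<=` Em s e by rewrite fsubUset H1 H2.
have H1' := sites_keep H1 H2 Hd.
apply: (@eq_from_nth _ 0); first by rewrite !size_chg.
move=> k0 _.
case: (boolP (has (fun i => i <= k0 <= i + 1) (enum_fset T1))) => [/hasP [i Hi Hp]|/hasPn Hn1].
  rewrite (chg_nth_in HU _ Hp) ?in_fsetU ?Hi // (chg_nth_in H1' Hi Hp).
  by rewrite /fwin chg_keep //; [rewrite -EmP; apply: (fsubsetP H1) | apply: Hd].
case: (boolP (has (fun i => i <= k0 <= i + 1) (enum_fset T2))) => [/hasP [i Hi Hp]|/hasPn Hn2].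
  rewrite (chg_nth_in HU _ Hp) ?in_fsetU ?Hi ?orbT // (chg_nth_out H1') //.
  by rewrite (chg_nth_in H2 Hi Hp).
rewrite (chg_nth_out HU) ?(chg_nth_out H1') // ?(chg_nth_out H2) //.
by move=> i; rewrite in_fsetU => /orP [] H; [apply: Hn1 | apply: Hn2].
Qed.

End Sites.

Lemma chg_id s T e : non_overlapping s -> T `<=` Em s e -> chg s T e = e.
Proof.
move=> Hno HT; apply: (@eq_from_nth _ 0); first by rewrite size_chg.
move=> k0 _.
case: (boolP (has (fun i => i <= k0 <= i + 1) (enum_fset T))) => [/hasP [i Hi Hp]|/hasPn Hn].
  rewrite (chg_nth_in Hno erefl erefl HT Hi Hp) occ_fwin; last by lia.
    have Hoi : occurs s e i by rewrite -EmP; apply: (fsubsetP HT).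
    have := occ_pos Hoi => Hp0; congr nth; lia.
  by rewrite -EmP; apply: (fsubsetP HT).
by rewrite (chg_nth_out erefl erefl HT).
Qed.

Fixpoint lexlt (s t : seq nat) : bool :=
  match s, t with
  | x :: s', y :: t' => (x < y) || ((x == y) && lexlt s' t')
  | _, _ => false
  end.

Lemma lexlt_irr s : lexlt s s = false.
Proof. by elim: s => //= x s ->; rewrite ltnn eqxx. Qed.

Lemma lexlt_trans s t u : lexlt s t -> lexlt t u -> lexlt s u.
Proof.
elim: s t u => [|x s IH] [|y t] [|z u] //=.
case/orP => [Hxy|/andP [/eqP -> Hst]]; case/orP => [Hyz|/andP [/eqP <- Htu]].
- by rewrite (ltn_trans Hxy Hyz).
- by rewrite Hxy.
- by rewrite Hyz.
- by rewrite eqxx (IH _ _ Hst Htu) orbT.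
Qed.

Lemma lexlt_nth s t k : size s = size t -> k < size s ->
  (forall i, i < k -> nth 0 s i = nth 0 t i) -> nth 0 s k < nth 0 t k -> lexlt s t.
Proof.
elim: s t k => [|x s IH] [|y t] k //= [Hsz] Hk Hpre Hlt.
case: k Hk Hpre Hlt => [|k] Hk Hpre Hlt /=; first by rewrite Hlt.
have -> : x = y by apply: (Hpre 0).
rewrite eqxx (IH t k) ?orbT //.
by move=> i Hi; apply: (Hpre i.+1).
Qed.

Lemma lex_at e e' j : size e' = size e -> j.+1 < size e ->
  (forall k0, k0 < j -> nth 0 e' k0 = nth 0 e k0) ->
  (nth 0 e' j < nth 0 e j) || ((nth 0 e' j == nth 0 e j) && (nth 0 e' j.+1 < nth 0 e j.+1)) ->
  lexlt e' e.
Proof.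
move=> Hs Hj Hpre /orP [H|/andP [/eqP H1 H2]].
- by apply: (lexlt_nth (k := j)) => //; rewrite Hs; lia.
- apply: (lexlt_nth (k := j.+1)) => //; first by rewrite Hs.
  move=> i Hi; case: (ltnP i j) => Hij; first exact: Hpre.
  by have -> : i = j by lia.
Qed.

Lemma vals_sorted w : sorted ltn (vals w).
Proof.
by rewrite ltn_sorted_uniq_leq sort_uniq undup_uniq (sort_sorted leq_total).
Qed.

Lemma fwin_mono e i x y : x < y -> y < size (vals (window e i)) -> fwin e i x < fwin e i y.
Proof.
move=> Hxy Hy; rewrite /fwin.
apply: (sorted_ltn_nth ltn_trans 0 (vals_sorted _)) => //.
by rewrite inE; apply: ltn_trans Hy.
Qed.

Lemma occ_idx s e i m : occurs s e i -> m < 4 -> nth 0 s m < size (vals (window e i)).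
Proof.
move=> Ho Hm; move: (Ho) => /and3P [H1 H2 /eqP <-].
rewrite /red (nth_map 0) ?size_window // index_mem /vals mem_sort mem_undup mem_nth //.
by rewrite size_window.
Qed.

Lemma occ_val_idx (r s e : seq nat) i x : occurs s e i -> size s = 4 -> (x \in r -> x \in s) -> x \in r ->
  x < size (vals (window e i)).
Proof.
move=> Ho Hs Hrs Hx.
move: (Hrs Hx) => /(nthP 0) [m Hm <-].
by apply: occ_idx => //; rewrite -Hs.
Qed.

Definition cmp (r s : seq nat) :=
  (nth 0 r 1 < nth 0 s 1) || ((nth 0 r 1 == nth 0 s 1) && (nth 0 r 2 < nth 0 s 2)).
Definition ordR (r s : seq nat) (x y : seq nat) := if cmp r s then lexlt x y else lexlt y x.

Lemma ordR_irr r s x : ordR r s x x = false.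
Proof. by rewrite /ordR; case: cmp; rewrite lexlt_irr. Qed.

Lemma ordR_trans r s x y z : ordR r s x y -> ordR r s y z -> ordR r s x z.
Proof.
rewrite /ordR; case: cmp => H1 H2; [exact: lexlt_trans H1 H2 | exact: lexlt_trans H2 H1].
Qed.

Section Flip.
Variables (r s : seq nat).
Hypothesis Hno : non_overlapping s.
Hypothesis Hf : nth 0 r 0 = nth 0 s 0.
Hypothesis Hl : nth 0 r 3 = nth 0 s 3.
Hypothesis Hss : size s = 4.
Hypothesis Hrs : forall x, x \in r -> x \in s.
Hypothesis Hsr : size r = 4.
Hypothesis Hne : (nth 0 r 1 != nth 0 s 1) || (nth 0 r 2 != nth 0 s 2).

Lemma flip_ord e j : occurs s e j -> ordR r s (chg r [fset j] e) e.
Proof.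
move=> Ho.
have HT : [fset j] `<=` Em s e by rewrite fsub1set EmP.
have Hj1 := occ_pos Ho; have Hjs := occ_size Ho.
set e' := chg r [fset j] e.
have Hpre : forall k0, k0 < j -> nth 0 e' k0 = nth 0 e k0.
  move=> k0 Hk; apply: (chg_nth_out Hf Hl HT) => i; rewrite in_fset1 => /eqP ->.
  by apply/negP; lia.
have Hjin : j \in [fset j] by rewrite in_fset1.
have E1 : nth 0 e' j = fwin e j (nth 0 r 1).
  by rewrite /e' (chg_nth_in Hno Hf Hl HT Hjin) ?subSnn //; lia.
have E2 : nth 0 e' j.+1 = fwin e j (nth 0 r 2).
  rewrite /e' (chg_nth_in Hno Hf Hl HT Hjin); last by lia.
  by congr fwin; congr nth; lia.
have F1 : nth 0 e j = fwin e j (nth 0 s 1) by rewrite occ_fwin //; congr nth; lia.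
have F2 : nth 0 e j.+1 = fwin e j (nth 0 s 2) by rewrite occ_fwin //; congr nth; lia.
have Ib1 := occ_idx Ho (isT : 1 < 4).
have Ib2 := occ_idx Ho (isT : 2 < 4).
have Ia : forall m, m < 4 -> nth 0 r m < size (vals (window e j)).
  move=> m Hm.
  have Hin : nth 0 r m \in r by apply: mem_nth; rewrite Hsr.
  have /(nthP 0) [m' Hm' <-] := Hrs Hin.
  by apply: occ_idx => //; rewrite -Hss.
have Ia1 := Ia 1 isT; have Ia2 := Ia 2 isT.
have Hsz : size e' = size e by rewrite size_chg.
have Hjs' : j.+1 < size e by lia.
have Hmono := @fwin_mono e j.
rewrite /ordR /cmp; case: ifP => Hc.
  refine (lex_at Hsz Hjs' Hpre _); rewrite E1 F1 E2 F2.
  case/orP: Hc => [H|/andP [/eqP H1 H2]]; first by rewrite Hmono.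
  by rewrite H1 eqxx ltnn /= Hmono.
apply: (lex_at (esym Hsz) _ (fun k0 Hk => esym (Hpre k0 Hk))); first by rewrite Hsz.
rewrite E1 F1 E2 F2.
move: Hne Hc; case: (ltngtP (nth 0 r 1) (nth 0 s 1)) => H //=.
  by move=> _ _; rewrite Hmono.
rewrite H eqxx ltnn /= => Hn2 Hc2.
have H3 : nth 0 s 2 < nth 0 r 2 by move: Hn2 Hc2; lia.
by rewrite Hmono ?orbT.
Qed.
End Flip.


Inductive star (X : Type) (R : X -> X -> Prop) : X -> X -> Prop :=
| st_refl x : star R x x
| st_step x y z : R x y -> star R y z -> star R x z.

Lemma star_trans X (R : X -> X -> Prop) x y z : star R x y -> star R y z -> star R x z.
Proof. by elim=> // x0 y0 z0 H _ IH Hz; apply: st_step H (IH Hz). Qed.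

Lemma star1 X (R : X -> X -> Prop) x y : R x y -> star R x y.
Proof. by move=> H; apply: st_step H (st_refl _ _). Qed.

Section Newman.
Variables (X : Type) (R : X -> X -> Prop) (G : X -> Prop) (mu : X -> nat).
Hypothesis HG : forall x y, G x -> R x y -> G y.
Hypothesis Hmu : forall x y, G x -> R x y -> mu y < mu x.
Hypothesis HLC : forall x y1 y2, G x -> R x y1 -> R x y2 ->
  y1 = y2 \/ exists w, R y1 w /\ R y2 w.
Hypothesis Hdec : forall x, G x -> (exists y, R x y) \/ (forall y, ~ R x y).

Lemma star_G x y : G x -> star R x y -> G y.
Proof. by move=> Gx H; elim: H Gx => // x0 y0 z0 H _ IH Gx; apply: IH (HG Gx H). Qed.

Lemma star_mu x y : G x -> star R x y -> mu y <= mu x.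
Proof.
move=> Gx H; elim: H Gx => // x0 y0 z0 H _ IH Gx.
by apply: leq_trans (IH (HG Gx H)) (ltnW (Hmu Gx H)).
Qed.

Lemma nf_exists x : G x -> exists z, star R x z /\ forall y, ~ R z y.
Proof.
move: {2}(mu x) (leqnn (mu x)) => m; elim: m x => [|m IH] x Hm Gx.
  case: (Hdec Gx) => [[y Hy]|Hn]; last by exists x; split => //; apply: st_refl.
  by move: (Hmu Gx Hy); rewrite leqn0 in Hm; rewrite (eqP Hm).
case: (Hdec Gx) => [[y Hy]|Hn]; last by exists x; split => //; apply: st_refl.
have Hy' : mu y <= m by move: (Hmu Gx Hy); lia.
have [z [Hz Hn]] := IH y Hy' (HG Gx Hy).
by exists z; split => //; apply: st_step Hy Hz.
Qed.

Lemma star_inv x z : star R x z -> x = z \/ exists y, R x y /\ star R y z.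
Proof. by case=> [x0|x0 y z0 H1 H2]; [left | right; exists y]. Qed.

Lemma star_nf x z : star R x z -> (forall y, ~ R x y) -> z = x.
Proof. by case/star_inv => [->//|[y [Hy _]]] N; case: (N _ Hy). Qed.

Lemma nf_unique x z1 z2 : G x -> star R x z1 -> star R x z2 ->
  (forall y, ~ R z1 y) -> (forall y, ~ R z2 y) -> z1 = z2.
Proof.
move: {2}(mu x) (leqnn (mu x)) => m; elim: m x z1 z2 => [|m IH] x z1 z2 Hm Gx H1 H2 N1 N2.
  case/star_inv: H1 => [E|[y [R1 _]]]; last first.
    by move: (Hmu Gx R1); rewrite leqn0 in Hm; rewrite (eqP Hm).
  subst z1; by rewrite (star_nf H2 N1).
case/star_inv: H1 => [E|[y1 [R1 S1]]].
  subst z1; by rewrite (star_nf H2 N1).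
case/star_inv: H2 => [E|[y2 [R2 S2]]].
  subst z2; by case: (N2 _ R1).
have Gy1 := HG Gx R1; have Gy2 := HG Gx R2.
have Hm1 : mu y1 <= m by move: (Hmu Gx R1); lia.
have Hm2 : mu y2 <= m by move: (Hmu Gx R2); lia.
case: (HLC Gx R1 R2) => [E|[w [W1 W2]]].
  by subst y2; apply: (IH y1).
have [z3 [Hz3 N3]] := nf_exists (HG Gy1 W1).
have E1 : z1 = z3 by apply: (IH y1) => //; apply: st_step W1 Hz3.
have E2 : z2 = z3 by apply: (IH y2) => //; apply: st_step W2 Hz3.
by rewrite E1 E2.
Qed.

End Newman.

Fixpoint allseq (m b : nat) : seq (seq nat) :=
  if m is m'.+1 then [seq x :: s | x <- iota 0 b, s <- allseq m' b] else [:: [::]].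

Lemma allseqP m b s : size s = m -> all (fun x => x < b) s -> s \in allseq m b.
Proof.
elim: m s => [|m IH] [|x s] //= [Hs] /andP [Hx Ha].
apply: (allpairs_f (fun x s => x :: s)); first by rewrite mem_iota.
exact: IH.
Qed.

Lemma invseq_allseq n z : invseq n z -> z \in allseq n n.
Proof.
case/andP => /eqP Hs Ha; apply: allseqP => //.
apply/(all_nthP 0) => k Hk.
move/(all_nthP 0): Ha => /(_ k); rewrite size_iota -Hs => /(_ Hk).
rewrite nth_iota // add1n /= => H; lia.
Qed.

Lemma count_lt (T : eqType) (A B : pred T) (F : seq T) x :
  (forall w, A w -> B w) -> x \in F -> B x -> ~~ A x -> count A F < count B F.
Proof.
move=> Hsub; elim: F => [|y F IH] //=; rewrite in_cons => /orP [/eqP <-|HxF] Bx nAx.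
  rewrite Bx (negbTE nAx) add0n add1n ltnS; apply: sub_count => w; exact: Hsub.
have := IH HxF Bx nAx; case Ay: (A y); last by lia.
by rewrite (Hsub _ Ay); lia.
Qed.


Record good_pair (a b : seq nat) : Prop := GP {
  gp_sa : size a = 4; gp_sb : size b = 4;
  gp_noa : non_overlapping a; gp_nob : non_overlapping b;
  gp_f : nth 0 a 0 = nth 0 b 0; gp_l : nth 0 a 3 = nth 0 b 3;
  gp_ab : forall x, x \in a -> x \in b; gp_ba : forall x, x \in b -> x \in a;
  gp_ne : (nth 0 a 1 != nth 0 b 1) || (nth 0 a 2 != nth 0 b 2);
  gp_Pab : forall n (T : {fset nat}) e, invseq n e -> T `<=` Em a e ->
     [/\ invseq n (chg b T e), T `<=` Em b (chg b T e) & chg a T (chg b T e) = e];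
  gp_Pba : forall n (T : {fset nat}) e, invseq n e -> T `<=` Em b e ->
     [/\ invseq n (chg a T e), T `<=` Em a (chg a T e) & chg b T (chg a T e) = e]
}.

Lemma good_pair_sym a b : good_pair a b -> good_pair b a.
Proof.
case=> sa sb noa nob f l ab ba ne Pab Pba; constructor => //.
all: first [by rewrite f | by rewrite l | by rewrite eq_sym (eq_sym (nth 0 b 2))].
Qed.

Definition Rsys (a b : seq nat) (T : {fset nat}) (z z' : seq nat) :=
  exists j, [/\ j \in Em b z, j \notin T & z' = chg a [fset j] z].
Definition Gsys (b : seq nat) (n : nat) (T : {fset nat}) (z : seq nat) :=
  invseq n z /\ T `<=` Em b z.
Definition musys (a b : seq nat) (n : nat) (z : seq nat) :=
  count (fun w => ordR a b w z) (allseq n n).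

Section Sys.
Variables (a b : seq nat) (n : nat).
Hypothesis Hgp : good_pair a b.

Let Hsa := gp_sa Hgp. Let Hsb := gp_sb Hgp.
Let Hnoa := gp_noa Hgp. Let Hnob := gp_nob Hgp.
Let Hf := gp_f Hgp. Let Hl := gp_l Hgp.
Let Hf' := esym (gp_f Hgp). Let Hl' := esym (gp_l Hgp).

Lemma Rsys_G T z y : Gsys b n T z -> Rsys a b T z y -> Gsys b n T y.
Proof.
case=> Hi HT [j [Hj HjT ->]]; split.
  have Hj1 : [fset j] `<=` Em b z by rewrite fsub1set.
  by have [? _ _] := gp_Pba Hgp Hi Hj1.
apply: (sites_keep Hnob Hf Hl) => //; first by rewrite fsub1set.
by move=> x Hx; rewrite in_fset1; apply/negP => /eqP E; rewrite -E Hx in HjT.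
Qed.

Lemma Rsys_mu T z y : Gsys b n T z -> Rsys a b T z y -> musys a b n y < musys a b n z.
Proof.
case=> Hi HT [j [Hj HjT ->]].
have Hord : ordR a b (chg a [fset j] z) z.
  apply: (flip_ord Hnob Hf Hl Hsb (gp_ab Hgp) Hsa (gp_ne Hgp)); by rewrite -EmP.
apply: (count_lt (x := chg a [fset j] z)).
- by move=> w Hw; apply: ordR_trans Hw Hord.
- apply: invseq_allseq.
  have Hj1 : [fset j] `<=` Em b z by rewrite fsub1set.
  by have [? _ _] := gp_Pba Hgp Hi Hj1.
- exact: Hord.
- by rewrite ordR_irr.
Qed.

Lemma Rsys_LC T z y1 y2 : Gsys b n T z -> Rsys a b T z y1 -> Rsys a b T z y2 ->
  y1 = y2 \/ exists w, Rsys a b T y1 w /\ Rsys a b T y2 w.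
Proof.
case=> Hi HT [j [Hj HjT ->]] [k [Hk HkT ->]].
case: (eqVneq j k) => [->|Hjk]; first by left.
right; exists (chg a [fset j; k] z).
have Hj1 : [fset j] `<=` Em b z by rewrite fsub1set.
have Hk1 : [fset k] `<=` Em b z by rewrite fsub1set.
have D1 : forall x, x \in [fset k] -> x \notin [fset j].
  by move=> x; rewrite !in_fset1 => /eqP ->; rewrite eq_sym.
have D2 : forall x, x \in [fset j] -> x \notin [fset k].
  by move=> x; rewrite !in_fset1 => /eqP ->.
split.
- exists k; split => //.
    by move: (sites_keep Hnob Hf Hl Hk1 Hj1 D1); rewrite fsub1set.
  by rewrite -(chgU Hnob Hf Hl Hk1 Hj1 D1) fsetUC.
- exists j; split => //.
    by move: (sites_keep Hnob Hf Hl Hj1 Hk1 D2); rewrite fsub1set.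
  by rewrite -(chgU Hnob Hf Hl Hj1 Hk1 D2).
Qed.

Lemma Rsys_dec T z : (exists y, Rsys a b T z y) \/ (forall y, ~ Rsys a b T z y).
Proof.
case: (boolP (Em b z `\` T == fset0)) => [/eqP E|/fset0Pn [j Hj]].
  right => y [j [Hj HjT _]].
  have : j \in Em b z `\` T by rewrite in_fsetD HjT Hj.
  by rewrite E in_fset0.
left; move: Hj; rewrite in_fsetD => /andP [HjT Hj].
by exists (chg a [fset j] z); exists j.
Qed.

Lemma Rsys_normal T z : Gsys b n T z -> (forall y, ~ Rsys a b T z y) <-> Em b z = T.
Proof.
case=> Hi HT; split.
  move=> N; apply/eqP; rewrite eqEfsubset HT andbT.
  apply/fsubsetP => j Hj; apply/negPn/negP => HjT.
  by apply: (N (chg a [fset j] z)); exists j.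
by move=> E y [j [Hj HjT _]]; rewrite E in Hj; rewrite Hj in HjT.
Qed.

Lemma Rsys_nf_exists T z : Gsys b n T z ->
  exists w, star (Rsys a b T) z w /\ Em b w = T.
Proof.
move=> Gz.
have [w [Hw N]] := nf_exists (@Rsys_G T) (@Rsys_mu T) (fun x _ => Rsys_dec T x) Gz.
exists w; split => //.
by apply/(Rsys_normal (star_G (@Rsys_G T) Gz Hw)).
Qed.

Lemma Rsys_nf_unique T z w1 w2 : Gsys b n T z ->
  star (Rsys a b T) z w1 -> star (Rsys a b T) z w2 -> Em b w1 = T -> Em b w2 = T ->
  w1 = w2.
Proof.
move=> Gz H1 H2 E1 E2.
apply: (nf_unique (@Rsys_G T) (@Rsys_mu T) (@Rsys_LC T) (fun x _ => Rsys_dec T x) Gz H1 H2).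
  by apply/(Rsys_normal (star_G (@Rsys_G T) Gz H1)).
by apply/(Rsys_normal (star_G (@Rsys_G T) Gz H2)).
Qed.

Lemma Rsys_star_G T z w : Gsys b n T z -> star (Rsys a b T) z w -> Gsys b n T w.
Proof. by move=> Gz H; apply: (star_G (@Rsys_G T) Gz H). Qed.

Lemma Rsys_star_mu T z w : Gsys b n T z -> star (Rsys a b T) z w -> musys a b n w <= musys a b n z.
Proof. by move=> Gz H; apply: (star_mu (@Rsys_G T) (@Rsys_mu T) Gz H). Qed.

End Sys.


Lemma chg0 r e : chg r fset0 e = e.
Proof.
apply: (@eq_from_nth _ 0); first by rewrite size_chg.
move=> k0 Hk; rewrite size_chg in Hk.
by rewrite /chg nth_mkseq //= enum_fset0.
Qed.

Section Sys2.
Variables (a b : seq nat) (n : nat).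
Hypothesis Hgp : good_pair a b.

Let Hsa := gp_sa Hgp. Let Hsb := gp_sb Hgp.
Let Hnoa := gp_noa Hgp. Let Hnob := gp_nob Hgp.
Let Hf := gp_f Hgp. Let Hl := gp_l Hgp.
Let Hf' := esym (gp_f Hgp). Let Hl' := esym (gp_l Hgp).

Lemma Rsys_multi T D z : Gsys b n T z -> D `<=` Em b z -> (forall x, x \in D -> x \notin T) ->
  star (Rsys a b T) z (chg a D z) /\
  (D != fset0 -> musys a b n (chg a D z) < musys a b n z).
Proof.
move: {2}#|`D| (erefl #|`D|) => m; elim: m D z => [|m IH] D z Hc Gz HD HDT.
  by rewrite (cardfs0_eq Hc) chg0 eqxx; split => //; apply: st_refl.
have : D != fset0 by apply/negP => /eqP E; rewrite E cardfs0 in Hc.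
case/fset0Pn => j Hj.
have Hj1 : [fset j] `<=` Em b z by rewrite fsub1set; apply: (fsubsetP HD).
have HD1 : D `\ j `<=` Em b z by apply: fsubset_trans HD; apply: fsubsetDl.
have Hdis : forall x, x \in D `\ j -> x \notin [fset j].
  by move=> x; rewrite in_fsetD1 in_fset1 => /andP [].
have ED : chg a D z = chg a (D `\ j) (chg a [fset j] z).
  by rewrite -(chgU Hnob Hf Hl HD1 Hj1 Hdis) fsetUC fsetD1K.
set y := chg a [fset j] z.
have Rzy : Rsys a b T z y.
  exists j; split => //; [by apply: (fsubsetP HD) | by apply: HDT].
have Gy := Rsys_G Hgp Gz Rzy.
have HDy : D `\ j `<=` Em b y by apply: (sites_keep Hnob Hf Hl HD1 Hj1 Hdis).
have Hc' : #|` D `\ j| = m by move: Hc; rewrite (cardfsD1 j D) Hj; lia.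
have [S1 M1] := IH (D `\ j) y Hc' Gy HDy (fun x Hx => HDT x (fsubsetP (fsubsetDl D [fset j]) x Hx)).
rewrite ED; split; first by apply: st_step Rzy S1.
move=> _; apply: leq_ltn_trans (Rsys_mu Hgp Gz Rzy).
exact: (Rsys_star_mu Hgp Gy S1).
Qed.

Lemma transport T S y y' : T `<=` S -> invseq n y -> S `<=` Em a y ->
  Rsys b a S y y' -> Rsys a b T (chg b T y') (chg b T y).
Proof.
move=> HTS Hi HS [j [Hj HjS ->]].
have HjT : j \notin T by apply/negP => H; rewrite (fsubsetP HTS _ H) in HjS.
have HT : T `<=` Em a y by apply: fsubset_trans HS.
have Hj1 : [fset j] `<=` Em a y by rewrite fsub1set.
have D1 : forall x, x \in T -> x \notin [fset j].
  by move=> x Hx; rewrite in_fset1; apply/negP => /eqP E; rewrite -E Hx in HjT.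
have D2 : forall x, x \in [fset j] -> x \notin T.
  by move=> x; rewrite in_fset1 => /eqP ->.
have E : chg b T (chg b [fset j] y) = chg b [fset j] (chg b T y).
  by rewrite -(chgU Hnoa Hf' Hl' HT Hj1 D1) fsetUC (chgU Hnoa Hf' Hl' Hj1 HT D2).
set v := chg b T y.
have [Hv _ _] := gp_Pab Hgp Hi HT.
have Hjv : [fset j] `<=` Em a v by apply: (sites_keep Hnoa Hf' Hl' Hj1 HT D2).
have [_ Hj' Hinv] := gp_Pab Hgp Hv Hjv.
rewrite E; exists j; split => //.
by move: Hj'; rewrite fsub1set.
Qed.

Lemma transport_star T S y x : T `<=` S -> Gsys a n S y -> star (Rsys b a S) y x ->
  star (Rsys a b T) (chg b T x) (chg b T y).
Proof.
move=> HTS Gy H; elim: H Gy => [y0|y0 y1 x0 R1 _ IH] Gy; first by apply: st_refl.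
have Gy1 := Rsys_G (good_pair_sym Hgp) Gy R1.
apply: star_trans (IH Gy1) (star1 _).
by case: Gy => Hi HS; apply: transport HTS Hi HS R1.
Qed.

End Sys2.


Lemma fsetUD_sub (T S : {fset nat}) : T `<=` S -> T `|` (S `\` T) = S.
Proof.
move=> H; apply/fsetP => x; rewrite in_fsetU in_fsetD.
by case: (boolP (x \in T)) => //= Hx; rewrite (fsubsetP H _ Hx).
Qed.

Lemma phiLoop_S a b k T h : phiLoop a b k.+1 T h =
  if Em b h == T then Some h else
  match psiEq a b k (Em b h) h with
  | Some x => phiLoop a b k T (chg b T x)
  | None => None
  end.
Proof. by []. Qed.

Lemma phiEq_S a b k T e : phiEq a b k.+1 T e = phiLoop a b k T (chg b T e).
Proof. by []. Qed.

Lemma swap_eq k : forall a b,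
  (forall T e, psiEq a b k T e = phiEq b a k T e) /\
  (forall T e, psiLoop a b k T e = phiLoop b a k T e).
Proof.
elim: k => [|k IH] a b; first by split.
split => T e /=; first by case: (IH a b) => _ ->.
case: (IH b a) => -> _; case: (phiEq a b k _ e) => // x.
by case: (IH a b) => _ ->.
Qed.

Lemma mono_eq k : forall a b,
  (forall T e z, phiEq a b k T e = Some z -> phiEq a b k.+1 T e = Some z) /\
  (forall T h z, phiLoop a b k T h = Some z -> phiLoop a b k.+1 T h = Some z).
Proof.
elim: k => [|k IH] a b; first by split.
split => T e z; first by rewrite !phiEq_S; case: (IH a b) => _; apply.
rewrite !phiLoop_S; case: ifP => // _.
case: (swap_eq k a b) => -> _; case: (swap_eq k.+1 a b) => -> _.
case Hx: (phiEq b a k _ e) => [x|//].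
rewrite (proj1 (IH b a) _ _ _ Hx).
by case: (IH a b) => _; apply.
Qed.

Lemma mono_eq_le a b k k' T e z : k <= k' -> phiEq a b k T e = Some z -> phiEq a b k' T e = Some z.
Proof.
move=> H; elim: k' H => [|k' IH]; first by rewrite leqn0 => /eqP ->.
rewrite leq_eqVlt => /orP [/eqP ->//|H] Hz.
by apply: (proj1 (mono_eq k' a b)); apply: IH.
Qed.

Section Sound.
Variable n : nat.

Definition LoopSound (a b : seq nat) k := forall T h z, Gsys b n T h ->
  phiLoop a b k T h = Some z -> star (Rsys a b T) h z /\ Em b z = T.
Definition Sound (a b : seq nat) k := forall T x z, invseq n x -> Em a x = T ->
  phiEq a b k T x = Some z -> star (Rsys a b T) (chg b T x) z /\ Em b z = T.

Lemma sound_all k : forall a b, good_pair a b -> LoopSound a b k /\ Sound a b k.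
Proof.
elim: k => [|k IH] a b Hgp; first by split.
have Hgp' := good_pair_sym Hgp.
have Hnob := gp_nob Hgp.
have [LSk _] := IH a b Hgp.
have [_ Sk'] := IH b a Hgp'.
split; last first.
  move=> T x z Hi Ex; rewrite phiEq_S => Hz; apply: LSk Hz.
  have HTx : T `<=` Em a x by rewrite Ex.
  by have [? ? _] := gp_Pab Hgp Hi HTx.
move=> T h z [Hi HT]; rewrite phiLoop_S.
case: ifP => [/eqP E [<-]|/negbT Hne]; first by split => //; apply: st_refl.
case: (swap_eq k a b) => -> _.
set S := Em b h.
case Hx: (phiEq b a k S h) => [x|//] Hz.
have [Sx Ex] := Sk' S h x Hi (erefl _) Hx.
have HTS : T `<=` S by [].
have [Hi0 HS0 _] := gp_Pba Hgp Hi (fsubset_refl S).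
have G0 : Gsys a n S (chg a S h) by [].
have [Hix _] := Rsys_star_G Hgp' G0 Sx.
have HTx : T `<=` Em a x by rewrite Ex.
have [Hi1 HT1 _] := gp_Pab Hgp Hix HTx.
have [Sz Ez] := LSk T (chg b T x) z (conj Hi1 HT1) Hz.
set u := chg a (S `\` T) h.
have HD : S `\` T `<=` Em b h by apply: fsubsetDl.
have HDT : forall y, y \in S `\` T -> y \notin T by move=> y; rewrite in_fsetD => /andP [].
have [Su _] := Rsys_multi Hgp (conj Hi HT) HD HDT.
have Gu := Rsys_star_G Hgp (conj Hi HT) Su.
have Eu : chg a S h = chg a T u.
  rewrite -{1}(fsetUD_sub HTS) (chgU Hnob (gp_f Hgp) (gp_l Hgp) HT HD) //.
  by move=> y Hy; rewrite in_fsetD Hy.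
have Eu' : chg b T (chg a S h) = u.
  by rewrite Eu; case: Gu => Hiu HTu; case: (gp_Pba Hgp Hiu HTu).
have St := transport_star Hgp HTS G0 Sx.
rewrite Eu' in St.
have [w [Sw Ew]] := Rsys_nf_exists Hgp Gu.
have Ezw : z = w.
  apply: (Rsys_nf_unique Hgp (conj Hi1 HT1) Sz (star_trans St Sw) Ez Ew).
by rewrite Ezw; split => //; apply: star_trans Su Sw.
Qed.

End Sound.


Lemma card_Em r e : #|` Em r e| <= size e.
Proof.
rewrite /Em card_fseq.
apply: leq_trans (size_undup _) _.
by rewrite size_filter (leq_trans (count_size _ _)) // size_iota.
Qed.

Lemma orbit_exit (X : eqType) (F : seq X) (good D : pred X) (g : X -> X) (h0 : X) :
  (forall h, good h -> h \in F) -> (forall h, good h -> D h -> good (g h)) ->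
  (forall h1 h2, good h1 -> D h1 -> good h2 -> D h2 -> g h1 = g h2 -> h1 = h2) ->
  good h0 -> (forall h, good h -> D h -> g h != h0) ->
  exists i, ~~ D (iter i g h0) /\ forall j, j < i -> D (iter j g h0).
Proof.
move=> HF Hg Hinj G0 Hn0.
case: (boolP (has (fun i => ~~ D (iter i g h0)) (iota 0 (size F).+1))) => [Hh|/hasPn Hall].
  have exP : exists i, ~~ D (iter i g h0) by case/hasP: Hh => i _ Hi; exists i.
  case: (ex_minnP exP) => m Hm Hmin; exists m; split => // j Hj.
  by apply/negPn/negP => Hd; move: (Hmin j Hd); rewrite leqNgt Hj.
have HD : forall i, i <= size F -> D (iter i g h0).
  by move=> i Hi; apply/negPn; apply: Hall; rewrite mem_iota add0n ltnS Hi.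
have HG : forall i, i <= size F -> good (iter i g h0).
  elim=> [//|i IH] Hi /=; apply: Hg; [apply: IH | apply: HD]; lia.
have Hinj' : forall i j, i <= size F -> j <= size F -> iter i g h0 = iter j g h0 -> i = j.
  elim=> [|i IH] [|j] //= Hi Hj E.
  - by move: (Hn0 _ (HG j (ltnW Hj)) (HD j (ltnW Hj))); rewrite -E eqxx.
  - by move: (Hn0 _ (HG i (ltnW Hi)) (HD i (ltnW Hi))); rewrite E eqxx.
  - congr S; apply: IH; try lia.
    apply: Hinj E; try apply: HG; try apply: HD; lia.
have Hu : uniq [seq iter i g h0 | i <- iota 0 (size F).+1].
  rewrite map_inj_in_uniq ?iota_uniq // => i j; rewrite !mem_iota !add0n !ltnS.
  by move=> Hi Hj; apply: Hinj'.
have := uniq_leq_size Hu.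
have Hsub : {subset [seq iter i g h0 | i <- iota 0 (size F).+1] <= F}.
  move=> y /mapP [i]; rewrite mem_iota add0n ltnS => Hi ->; exact: HF (HG i Hi).
by move=> /(_ _ Hsub); rewrite size_map size_iota ltnn.
Qed.

Lemma mono_loop_le a b k k' T e z : k <= k' -> phiLoop a b k T e = Some z -> phiLoop a b k' T e = Some z.
Proof.
move=> H; elim: k' H => [|k' IH]; first by rewrite leqn0 => /eqP ->.
rewrite leq_eqVlt => /orP [/eqP ->//|H] Hz.
by apply: (proj2 (mono_eq k' a b)); apply: IH.
Qed.

Lemma invseq_size n e : invseq n e -> size e = n.
Proof. by case/andP => /eqP. Qed.

Section Term.
Variable n : nat.

Lemma term_step a b (Hgp : good_pair a b) T x :
  invseq n x -> Em a x = T ->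
  (forall S h, invseq n h -> Em b h = S -> #|`T| < #|`S| ->
     exists K z, phiEq b a K S h = Some z) ->
  exists K z, phiEq a b K T x = Some z.
Proof.
move=> Hix Ex IHpsi.
have Hgp' := good_pair_sym Hgp.
pose good h := invseq n h && (T `<=` Em b h).
pose D h := Em b h != T.
have exP : forall h, exists k, ~~ (good h && D h) || (phiEq b a k (Em b h) h != None).
  move=> h; case: (boolP (good h && D h)) => [/andP [/andP [Hi HT] HD]|_]; last by exists 0.
  have Hlt : #|`T| < #|`Em b h|.
    by apply: fproper_ltn_card; rewrite fproperEneq eq_sym HT andbT; exact: HD.
  have [K [z Hz]] := IHpsi _ h Hi (erefl _) Hlt.
  by exists K; rewrite Hz orbT.
pose Kf h := ex_minn (exP h).
pose psi h := odflt h (phiEq b a (Kf h) (Em b h) h).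
have Hpsi : forall h, good h -> D h -> phiEq b a (Kf h) (Em b h) h = Some (psi h).
  move=> h Gh Dh; rewrite /psi /Kf; case: (ex_minnP (exP h)) => m Pm _.
  by move: Pm; rewrite Gh Dh /=; case: (phiEq b a m _ h).
have Hsound : forall h, good h -> D h ->
    star (Rsys b a (Em b h)) (chg a (Em b h) h) (psi h) /\ Em a (psi h) = Em b h.
  move=> h Gh Dh; have Gh' := Gh; case/andP: Gh' => Hi _.
  exact: (proj2 (sound_all n (Kf h) Hgp') _ _ _ Hi (erefl _) (Hpsi h Gh Dh)).
have HG0 : forall h, good h -> Gsys a n (Em b h) (chg a (Em b h) h).
  move=> h /andP [Hi _]; have [? ? _] := gp_Pba Hgp Hi (fsubset_refl (Em b h)); by split.
have Hpsi_inv : forall h, good h -> D h -> invseq n (psi h).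
  move=> h Gh Dh; have [Sx _] := Hsound h Gh Dh.
  by case: (Rsys_star_G Hgp' (HG0 h Gh) Sx).
have HTpsi : forall h, good h -> D h -> T `<=` Em a (psi h).
  by move=> h Gh Dh; rewrite (Hsound h Gh Dh).2; case/andP: Gh.
pose g h := chg b T (psi h).
have Hgood_g : forall h, good h -> D h -> good (g h).
  move=> h Gh Dh; have [H1 H2 _] := gp_Pab Hgp (Hpsi_inv h Gh Dh) (HTpsi h Gh Dh).
  by apply/andP.
have Hginv : forall h, good h -> D h -> chg a T (g h) = psi h.
  by move=> h Gh Dh; have [_ _ ->] := gp_Pab Hgp (Hpsi_inv h Gh Dh) (HTpsi h Gh Dh).
have Hinj : forall h1 h2, good h1 -> D h1 -> good h2 -> D h2 -> g h1 = g h2 -> h1 = h2.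
  move=> h1 h2 G1 D1 G2 D2 E.
  have Ep : psi h1 = psi h2 by rewrite -Hginv // E Hginv.
  have [S1 E1] := Hsound h1 G1 D1; have [S2 E2] := Hsound h2 G2 D2.
  have ES : Em b h1 = Em b h2 by rewrite -E1 -E2 Ep.
  set S := Em b h2.
  rewrite Ep in S1.
  have Hback : forall h, good h -> Em b h = S ->
      star (Rsys b a (Em b h)) (chg a (Em b h) h) (psi h2) -> star (Rsys a b S) (chg b S (psi h2)) h.
    move=> h Gh Eh Sh; have G0 := HG0 h Gh; rewrite Eh in G0 Sh.
    have St := transport_star Hgp (fsubset_refl S) G0 Sh.
    case/andP: Gh => Hi _.
    have HS : S `<=` Em b h by rewrite Eh.
    by have [_ _ Hinv] := gp_Pba Hgp Hi HS; rewrite Hinv in St.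
  have HS2 : S `<=` Em a (psi h2) by rewrite E2.
  have [Hq1 Hq2 _] := gp_Pab Hgp (Hpsi_inv h2 G2 D2) HS2.
  apply: (Rsys_nf_unique Hgp (conj Hq1 Hq2) (Hback h1 G1 ES S1) (Hback h2 G2 (erefl _) S2) ES (erefl _)).
set h0 := chg b T x.
have HTx : T `<=` Em a x by rewrite Ex.
have Hne0 : forall h, good h -> D h -> g h != h0.
  move=> h Gh Dh; apply/negP => /eqP E.
  have Ex' : psi h = x.
    by rewrite -Hginv // E /h0; have [_ _ ->] := gp_Pab Hgp Hix HTx.
  have E2 := (Hsound h Gh Dh).2; move: Dh; by rewrite /D -E2 Ex' Ex eqxx.
have G0 : good h0 by have [H1 H2 _] := gp_Pab Hgp Hix HTx; apply/andP.
have HF : forall h, good h -> h \in allseq n n by move=> h1 /andP [Hi1 _]; apply: invseq_allseq.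
have [i [Hi Hj]] := orbit_exit HF Hgood_g Hinj G0 Hne0.
have HGi : forall j, j <= i -> good (iter j g h0).
  elim=> [//|j IH] Hji /=; apply: Hgood_g; [apply: IH; lia | apply: Hj; lia].
have Hloop : forall d j : nat, (j + d)%N = i -> exists K, phiLoop a b K T (iter j g h0) = Some (iter i g h0).
  elim=> [|d IH] j Hjd.
    rewrite addn0 in Hjd; subst j; exists 1; rewrite phiLoop_S.
    by move: Hi; rewrite /D negbK => ->.
  have Hj1 : (j.+1 + d)%N = i by rewrite addSnnS.
  have [K1 HK1] := IH j.+1 Hj1.
  have Dh : D (iter j g h0) by apply: Hj; lia.
  have Gh : good (iter j g h0) by apply: HGi; lia.
  exists (maxn K1 (Kf (iter j g h0))).+1; rewrite phiLoop_S (negbTE Dh).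
  rewrite (proj1 (swap_eq _ a b)) (mono_eq_le (leq_maxr _ _) (Hpsi _ Gh Dh)).
  exact: (mono_loop_le (leq_maxl _ _) HK1).
have [K HK] := Hloop i 0 (add0n i).
exists K.+1; exists (iter i g h0); rewrite phiEq_S.
exact: HK.
Qed.

Lemma term_all m : forall a b, good_pair a b -> forall T x, invseq n x -> Em a x = T ->
  n - #|`T| < m -> exists K z, phiEq a b K T x = Some z.
Proof.
elim: m => [//|m IH] a b Hgp T x Hi Ex Hm.
apply: (term_step Hgp Hi Ex) => S h Hh Eh Hlt.
apply: (IH b a (good_pair_sym Hgp) S h Hh Eh).
have : #|`S| <= n by rewrite -Eh -(invseq_size Hh) card_Em.
lia.
Qed.

End Term.


Lemma leq_bigmax_s (s : seq nat) x : x \in s -> x <= \max_(y <- s) y.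
Proof.
elim: s => [//|y s IH]; rewrite in_cons big_cons => /orP [/eqP ->|H].
  exact: leq_maxl.
by apply: leq_trans (IH H) (leq_maxr _ _).
Qed.

Lemma normal_eq b n T h : Gsys b n T h -> Em b h `\` T = fset0 -> Em b h = T.
Proof.
case=> _ HT E0; apply/eqP; rewrite eqEfsubset HT andbT.
apply/fsubsetP => x Hx; apply/negPn/negP => HxT.
have : x \in Em b h `\` T by rewrite in_fsetD HxT Hx.
by rewrite E0 in_fset0.
Qed.

Lemma proc_term a b n (Hgp : good_pair a b) T h : Gsys b n T h ->
  exists z, [/\ star (Rsys a b T) h z, Em b z = T &
    forall k, musys a b n h < k -> procLoop a b k T h = Some z].
Proof.
move: {2}(musys a b n h) (leqnn (musys a b n h)) => m.
elim: m h => [|m IH] h Hm Gh; case: (boolP (Em b h `\` T == fset0)) => [/eqP E0|HD].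
- exists h; split; first exact: st_refl.
    exact: normal_eq Gh E0.
  by case=> [//|k] _; rewrite /= E0 eqxx.
- have HDT : forall y, y \in Em b h `\` T -> y \notin T by move=> y; rewrite in_fsetD => /andP [].
  have [_ Hlt] := Rsys_multi Hgp Gh (fsubsetDl _ _) HDT.
  by move: (Hlt HD); rewrite leqn0 in Hm; rewrite (eqP Hm).
- exists h; split; first exact: st_refl.
    exact: normal_eq Gh E0.
  by case=> [//|k] _; rewrite /= E0 eqxx.
- have HDT : forall y, y \in Em b h `\` T -> y \notin T by move=> y; rewrite in_fsetD => /andP [].
  have [S1 Hlt] := Rsys_multi Hgp Gh (fsubsetDl _ _) HDT.
  have Hlt' := Hlt HD.
  have Gh' := Rsys_star_G Hgp Gh S1.
  have [z [Sz Ez Hk]] := IH _ (ltnSE (leq_trans Hlt' Hm)) Gh'.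
  exists z; split; first exact: star_trans S1 Sz.
    exact: Ez.
  case=> [//|k] Hk'; rewrite /= (negbTE HD); apply: Hk; lia.
Qed.

Unset Implicit Arguments.

Theorem theorem2 (p q : seq nat) (d : nat)
  (Hsp : size p = 4) (Hsq : size q = 4)
  (Hnp : non_overlapping p) (Hnq : non_overlapping q)
  (Hfirst : nth 0 p 0 = nth 0 q 0) (Hlast : nth 0 p 3 = nth 0 q 3)
  (Hdp : \max_(x <- p) x = d) (Hdq : \max_(x <- q) x = d)
  (Hallp : forall j, j <= d -> j \in p) (Hallq : forall j, j <= d -> j \in q)
  (Hchp : forall n e i, invseq n e -> i \in Em p e -> invseq n (chg q [fset i] e))
  (Hchq : forall n e i, invseq n e -> i \in Em q e -> invseq n (chg p [fset i] e))
  (Hphi : forall n (T : {fset nat}) e, invseq n e -> T `<=` Em p e ->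
     [/\ invseq n (chg q T e), T `<=` Em q (chg q T e) & chg p T (chg q T e) = e])
  (Hphiinv : forall n (T : {fset nat}) h, invseq n h -> T `<=` Em q h ->
     [/\ invseq n (chg p T h), T `<=` Em p (chg p T h) & chg q T (chg p T h) = h])
  (n : nat) (e : seq nat) (He : invseq n e) :
  exists (k : nat) (x : seq nat),
    procedure p q k e = Some x /\ phiEq p q k (Em p e) e = Some x.
Proof.
set T := Em p e.
case: (eqVneq p q) => [Epq|Hpq].
  subst q.
  have Hid : chg p T e = e by apply: chg_id.
  exists 2, e; split.
    by rewrite /procedure -/T Hid /= fsetDv eqxx.
  by rewrite phiEq_S Hid phiLoop_S eqxx.
have Hne : (nth 0 p 1 != nth 0 q 1) || (nth 0 p 2 != nth 0 q 2).
  apply/negPn/negP => /norP [/negPn/eqP E1 /negPn/eqP E2].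
  move/eqP: Hpq; apply; apply: (@eq_from_nth _ 0); first by rewrite Hsp Hsq.
  rewrite Hsp => i; case: i => [//|[//|[//|[//|//]]]].
have Hgp : good_pair p q.
  constructor => //.
  - by move=> x Hx; apply: Hallq; rewrite -Hdp; apply: leq_bigmax_s.
  - by move=> x Hx; apply: Hallp; rewrite -Hdq; apply: leq_bigmax_s.
have HT : T `<=` Em p e by [].
have [Hi0 HT0 _] := Hphi n T e He HT.
have G0 : Gsys q n T (chg q T e) by [].
have [zP [SP EP HP]] := proc_term Hgp G0.
have [K [z Hz]] := @term_all n (n - #|`T|).+1 p q Hgp T e He (erefl _) (ltnSn _).
have [Sz Ez] := (sound_all n K Hgp).2 T e z He (erefl _) Hz.
have Ez' : z = zP by apply: (Rsys_nf_unique Hgp G0 Sz SP Ez EP).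
exists (maxn K (musys p q n (chg q T e)).+1), z; split.
  by rewrite /procedure -/T Ez'; apply: HP; rewrite leq_maxr.
by apply: mono_eq_le Hz; rewrite leq_maxl.
Qed.
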